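(* Let $d\ge 2$ and let $\mathcal P$ and $\mathcal H$ be as defined in the context. Then $\operatorname{I}(\mathcal P,\mathcal H)\ \ge\ \left(1-\frac{2}{e^2}\right)2^{2d-2}$; in particular $\operatorname{I}(\mathcal P,\mathcal H)\ge\Omega(2^{2d})$.
   Context: Let $d\ge 2$. Define the point set $\mathcal P=\{(x_1,\dots,x_d): x_1,\dots,x_{d-1}\in\{-1,1\},\ x_d\in\mathbb Z,\ |x_d|\le 2\sqrt{d-1}\}$ and the hyperplane set $\mathcal H=\{\{x\in\mathbb R^d:\sum_{i=1}^d a_ix_i=0\}: a_1,\dots,a_{d-1}\in\{0,1\},\ a_d=-1\}$ (so $|\mathcal H|=2^{d-1}$). $\operatorname{I}(\mathcal P,\mathcal H)$ is the number of pairs $(p,h)\in\mathcal P\times\mathcal H$ with $p\in h$. *)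

(* Defs.v *)
From HB Require Import structures.
From mathcomp Require Import all_boot all_order all_algebra.
From mathcomp Require Import reals.
From mathcomp Require Import sequences exp.
Set Implicit Arguments. Unset Strict Implicit. Unset Printing Implicit Defensive.
Import Order.TTheory GRing.Theory Num.Theory.
Local Open Scope ring_scope.

Section Incidences.
Variable R : realType.
Variable d : nat.

(* Parameters of a candidate point: signs s of x_1..x_{d-1} (true = 1,
   false = -1) and the last coordinate x_d = k - 2d, k : 'I_(4d+1),
   i.e. x_d ranges over the integers in [-2d, 2d], a window that contains
   every integer with |x_d| <= 2 sqrt(d-1). *)
Definition ptparam := ({ffun 'I_(d.-1) -> bool} * 'I_(4 * d).+1)%type.

Definition sgn (b : bool) : R := if b then 1 else -1.

Definition lastcoord (p : ptparam) : int := (p.2 : nat)%:Z - (2 * d)%:Z.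

Definition point (p : ptparam) : 'rV[R]_d :=
  \row_(j < d) (if (insub (j : nat) : option 'I_(d.-1)) is Some i then sgn (p.1 i)
                 else (lastcoord p)%:~R).

(* Membership in the point set P (x_1..x_{d-1} in {-1,1} hold by
   construction, x_d integer by construction). *)
Definition inP (p : ptparam) : bool :=
  (`|lastcoord p|%:~R : R) <= 2 * Num.sqrt (d.-1)%:R.

(* Hyperplanes are indexed by a in {0,1}^{d-1}; the normal vector is
   (a_1,...,a_{d-1}, -1). *)
Definition hparam := {ffun 'I_(d.-1) -> bool}.

Definition normal (a : hparam) : 'rV[R]_d :=
  \row_(j < d) (if (insub (j : nat) : option 'I_(d.-1)) is Some i then ((a i : nat)%:R)
                 else -1).

Definition incident (p : ptparam) (a : hparam) : bool :=
  \sum_(j < d) normal a 0 j * point p 0 j == 0.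

Definition incidences : nat :=
  #|[set pa : ptparam * hparam | inP pa.1 && incident pa.1 pa.2]|.

End Incidences.

(* Main.v *)
Require Import Defs.
From HB Require Import structures.
From mathcomp Require Import all_boot all_order all_algebra.
From mathcomp Require Import reals.
From mathcomp Require Import sequences exp.
Import Order.TTheory GRing.Theory Num.Theory.
Local Open Scope ring_scope.
From mathcomp Require Import zify ring lra.
Definition sgz (b : bool) : int := if b then 1 else -1.
Definition Ssum n (s a : {ffun 'I_n -> bool}) : int :=
  \sum_(i < n) (a i : nat)%:Z * sgz (s i).
Arguments Ssum {n}.

Definition flip n (i : 'I_n) (f : {ffun 'I_n -> bool}) : {ffun 'I_n -> bool} :=
  [ffun k => if k == i then ~~ f k else f k].

Lemma flipK n i : involutive (@flip n i).
Proof. by move=> f; apply/ffunP => k; rewrite !ffunE; case: eqP => //; rewrite negbK. Qed.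

Lemma cross n (i j : 'I_n) : i != j ->
  \sum_(s : {ffun 'I_n -> bool}) sgz (s i) * sgz (s j) = 0.
Proof.
move=> ij.
set X := \sum_(s : _) _.
have : X = - X.
  rewrite {1}/X (reindex_inj (inv_inj (@flipK n i))) /X -sumrN.
  apply: eq_bigr => s _; rewrite !ffunE eqxx [j == i]eq_sym (negbTE ij).
  by case: (s i) => /=; rewrite ?mulN1r ?mul1r ?opprK.
by move/eqP; rewrite -addr_eq0 -mulr2n mulrn_eq0 /= => /eqP.
Qed.

Lemma diag n (i : 'I_n) :
  \sum_(s : {ffun 'I_n -> bool}) sgz (s i) * sgz (s i) = (2 ^ n)%N%:Z.
Proof.
rewrite (eq_bigr (fun _ => 1)); last by move=> s _; case: (s i); rewrite /sgz ?mulN1r ?opprK ?mulr1.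
rewrite sumr_const card_ffun card_bool card_ord. exact: natz.
Qed.

Lemma sum_sq n (a : {ffun 'I_n -> bool}) :
  \sum_(s : {ffun 'I_n -> bool}) (Ssum s a)^+2 <= (n * 2 ^ n)%N%:Z.
Proof.
have E s : Ssum s a ^+ 2 = \sum_(i < n) \sum_(j < n)
     ((a i : nat)%:Z * (a j : nat)%:Z * (sgz (s i) * sgz (s j))).
  rewrite expr2 /Ssum mulr_suml; apply: eq_bigr => i _.
  by rewrite mulr_sumr; apply: eq_bigr => j _; ring.
rewrite (eq_bigr _ (fun s _ => E s)) exchange_big /=.
have -> : \sum_(i < n) \sum_(s : {ffun 'I_n -> bool}) \sum_(j < n)
     ((a i : nat)%:Z * (a j : nat)%:Z * (sgz (s i) * sgz (s j)))
   = \sum_(i < n) ((a i : nat)%:Z * (a i : nat)%:Z * (2 ^ n)%N%:Z).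
  apply: eq_bigr => i _; rewrite exchange_big /= (bigD1 i) //= -mulr_sumr diag.
  rewrite big1 ?addr0 // => j ji.
  by rewrite -mulr_sumr cross ?mulr0 // eq_sym.
apply: (@le_trans _ _ (\sum_(i<n) (2^n)%N%:Z)).
  by apply: ler_sum => i _; case: (a i) => /=; rewrite ?mul1r ?mul0r.
rewrite sumr_const card_ord.
by rewrite -mulr_natr natz -PoszM mulnC.
Qed.

Definition badset n : {set {ffun 'I_n -> bool} * {ffun 'I_n -> bool}} :=
  [set sa | (4 * n)%N%:Z < (Ssum sa.1 sa.2)^+2].

Lemma bad_count n : (0 < n)%N -> (4 * #|badset n| <= 2 ^ n * 2 ^ n)%N.
Proof.
move=> n0.
have H1 : (4 * n)%N%:Z *+ #|badset n| <=
    \sum_(sa : {ffun 'I_n -> bool} * {ffun 'I_n -> bool}) (Ssum sa.1 sa.2)^+2.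
  rewrite -sumr_const big_mkcond; apply: ler_sum => sa _.
  case: ifP => [|_]; last by rewrite sqr_ge0.
  by rewrite inE => h; exact: ltW.
have H2 : \sum_(sa : {ffun 'I_n -> bool} * {ffun 'I_n -> bool}) (Ssum sa.1 sa.2)^+2
    <= (n * 2 ^ n)%N%:Z *+ (2 ^ n).
  rewrite -(pair_bigA _ (fun s a => (Ssum s a)^+2)) /= exchange_big /=.
  have cT : #|{ffun 'I_n -> bool}| = (2^n)%N by rewrite card_ffun card_bool card_ord.
  rewrite -[X in _ *+ X]cT -sumr_const.
  by apply: ler_sum => a _; apply: sum_sq.
have := le_trans H1 H2.
rewrite !pmulrn !mulrzz -!PoszM lez_nat => h.
rewrite -(@leq_pmul2r n) //.
move: h; set P := (2 ^ n)%N; nia.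
Qed.

Lemma inj_part (R : realType) n : (0 < n)%N ->
  (#|~: badset n| <= incidences R n.+1)%N.
Proof.
move=> n0.
pose f (sa : {ffun 'I_n -> bool} * {ffun 'I_n -> bool}) : ptparam n.+1 * hparam n.+1 :=
  ((sa.1, inord (absz (Ssum sa.1 sa.2 + (2 * n.+1)%N%:Z))), sa.2).
have finj : injective f.
  by move=> [s a] [s' a'] [-> _ ->].
rewrite /incidences -(card_imset _ finj); apply: subset_leq_card.
apply/subsetP => x /imsetP [[s a] Hsa ->]; rewrite inE /=.
rewrite !inE -leNgt /= in Hsa.
have Sb : - (2 * n)%N%:Z <= Ssum s a <= (2 * n)%N%:Z by nia.
set S := Ssum s a in Hsa Sb *.
have lc : lastcoord (d:=n.+1) (s, inord `|S + (2 * n.+1)%N%:Z|) = S.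
  rewrite /lastcoord /= inordK; last by lia.
  rewrite gez0_abs; last by lia.
  by rewrite addrK.
apply/andP; split.
  rewrite /inP lc /=.
  rewrite -ler_sqr ?nnegrE ?mulr_ge0 ?sqrtr_ge0 //.
  rewrite exprMn sqr_sqrtr ?ler0n // -rmorphXn /=.
  rewrite real_normK ?num_real //.
  apply: (@le_trans _ _ (((4 * n)%N%:Z)%:~R)); first by rewrite ler_int.
  rewrite -[X in X <= _]/((4 * n)%:R : R) natrM.
  have -> : (4%:R : R) = 2 ^+ 2 by rewrite expr2 -natrM.
  by [].
have HS : forall (T : Type) (F : 'I_n -> T) (x0 : T) (i : 'I_n),
    match insub (i : nat) with Some k => F k | None => x0 end = F i.
  move=> T F x0 i; case: insubP => [k _ /= kE | ].
    by congr F; apply: val_inj.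
  by rewrite /= ltn_ord.
rewrite /incident big_ord_recr /= !mxE.
under eq_bigr => i _ do rewrite !mxE /= !HS.
rewrite insubF /=; last by rewrite ltnn.
rewrite lc.
have -> : \sum_(i < n) ((a i)%:R * sgn R (s i) : R) = S%:~R.
  rewrite /S /Ssum rmorph_sum; apply: eq_bigr => i _; rewrite rmorphM /=.
  by rewrite /sgn /sgz; case: (s i); rewrite ?rmorphN ?rmorph1.
by rewrite mulN1r subrr.
Qed.

Lemma ebound (R : realType) : 1 - 2 / expR 1 ^+ 2 <= 3/4 :> R.
Proof.
have h1 : (15/16 : R) <= expR (- (1/16)).
  by apply: le_trans (expR_ge1Dx _); lra.
have h2 : (15/16 : R) ^+ 32 <= expR (- (1/16)) ^+ 32.
  by apply: lerXn2r => //; rewrite nnegrE; lra.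
rewrite -expRM_natr in h2.
have h3 : (- (1/16)) * 32%:R = (- 2 : R) by lra.
rewrite h3 expRN in h2.
rewrite -expRM_natr mul1r.
have hp : 0 < expR (2%:R : R) by apply: expR_gt0.
have h4 : (1/8 : R) <= (15/16 : R) ^+ 32 by lra.
have h5 : (1/8 : R) <= (expR 2%:R)^-1 by apply: le_trans h4 h2.
rewrite mulrC -/(_ / _) in h5 *.
rewrite [2 / _]mulrC.
lra.
Qed.

Theorem proposition4p4 (R : realType) (d : nat) (hd : (2 <= d)%N) :
  (1 - 2 / expR 1 ^+ 2) * 2 ^+ (2 * d - 2) <= (incidences R d)%:R :> R.
Proof.
case: d hd => [|n] // hd.
have n0 : (0 < n)%N by [].
have hb := bad_count n n0.
have hi := inj_part R n n0.
have hc : (#|badset n| + #|~: badset n| = 2 ^ n * 2 ^ n)%N.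
  by rewrite cardsC card_prod card_ffun card_bool card_ord.
have h4 : (3 * (2 ^ n * 2 ^ n) <= 4 * incidences R n.+1)%N.
  move: hb hi hc; set P := (2 ^ n * 2 ^ n)%N; set B := #|badset n|; set C := #|~: badset n|; set I := incidences R n.+1; lia.
rewrite (_ : (2 * n.+1 - 2)%N = (n + n)%N); last by lia.
apply: (@le_trans _ _ (3/4 * 2 ^+ (n + n))).
  by apply: ler_wpM2r; [rewrite exprn_ge0 | exact: ebound].
have : ((3 * (2 ^ n * 2 ^ n))%:R : R) <= (4 * incidences R n.+1)%:R.
  by rewrite ler_nat.
rewrite !natrM !natrX exprD.
lra.
Qed.
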